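(* Let $(|B(\lambda)\rangle,\mathcal{M})$ be an $N$-regular quantum scenario that is a paradox. Then: 1. For any $z_0,z_1\in\{0,1\}$, $\bigoplus_{j}r(j,0,z_0)\neq\bigoplus_{j}r(j,1,z_1)$. 2. For each $l\in\{0,1\}$, $\bigoplus_{j}r(j,l,0)=\bigoplus_{j}r(j,l,1)$. (Here $j$ ranges over $0,\dots,N-1$.)
   Context: $\equiv$ is equality modulo $2\pi$; $\oplus$ is addition mod 2. For $\varphi\in\mathbb{R}$, $E_\varphi=\cos\varphi X+\sin\varphi Y$, with $+1$ eigenvector $|\varphi\rangle=\frac{1}{\sqrt2}(|0\rangle+e^{i\varphi}|1\rangle)$ and $-1$ eigenvector $|\varphi+\pi\rangle$; outcomes $+1,-1$ relabelled $0,1$; measurements identified with angles. A measurement scenario $\mathcal{M}=(M_1,M_2,M_3)$ consists of finite sets $M_i\subseteq[0,\pi)$ of angles for qubit $i$; contexts are triples in $M_1\times M_2\times M_3$. For a three-qubit state $|\psi\rangle$, the event $(A,B,C)\to(a,b,c)$ is impossible if $(\langle A+a\pi|\otimes\langle B+b\pi|\otimes\langle C+c\pi|)|\psi\rangle=0$; $(|\psi\rangle,\mathcal{M})$ is a paradox if for every assignment $g$ of outcomes in $\{0,1\}$ to all measurements of $M_1,M_2,M_3$ (as disjoint sets) some context $(A,B,C)$ has $(A,B,C)\to(g(A),g(B),g(C))$ impossible. For $\lambda\in[0,\frac{\pi}{2})$, $|v_\lambda\rangle=\cos\frac{\lambda}{2}|0\rangle+\sin\frac{\lambda}{2}|1\rangle$,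 $|w_\lambda\rangle=\sin\frac{\lambda}{2}|0\rangle+\cos\frac{\lambda}{2}|1\rangle$, $|B(\lambda)\rangle=\frac{1}{\sqrt2}(|00\rangle|v_\lambda\rangle+|11\rangle|w_\lambda\rangle)$. Define modulo $2\pi$: $\beta(\lambda,\varphi)=\varphi-2\arctan\left(\frac{\cos\frac{\lambda}{2}\sin\varphi}{\sin\frac{\lambda}{2}+\cos\frac{\lambda}{2}\cos\varphi}\right)$. For $|B(\lambda)\rangle$, $(A,B,C)\to(a,b,c)$ is impossible iff $A+B\equiv\beta(\lambda,C+c\pi)+(1\oplus a\oplus b)\pi$. $(|B(\lambda)\rangle,\mathcal{M})$ is maximally impossible if for every $C\in M_3$ and $z\in\{0,1\}$: every $A\in M_1$ admits $B\in M_2$, $a,b$ with $(A,B,C)\to(a,b,z)$ impossible, and every $B\in M_2$ admits $A\in M_1$, $a,b$ with $(A,B,C)\to(a,b,z)$ impossible. Then $|M_1|=|M_2|=:N$; write $M_1=\{A_0,\dots,A_{N-1}\}$, $M_2=\{B_0,\dots,B_{N-1}\}$, $M_3=\{C_0,\dots,C_{n-1}\}$; for each $(j,l,z)$ there is a unique $k=:K(j,l,z)$ with $A_j+B_k-\beta(\lambda,C_l+z\pi)$ an integer multiple of $\pi$, and $r(j,l,z)\in\{0,1\}$ is defined by $A_j+B_{K(j,l,z)}-\beta(\lambda,C_l+z\pi)\equiv r(j,l,z)\pi$. $\Psi_l(z)$ is the $\mathbb{Z}_2$-linear system $\{a_j\oplus b_{K(j,l,z)}=r(j,l,z):j=0,\dots,N-1\}$.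 With $n=2$, maximal rank means for all $z_0,z_1$ the coefficient matrix of $\Psi_0(z_0)\cup\Psi_1(z_1)$ has rank $2N-1$ over $\mathbb{Z}_2$. $N$-regular: maximally impossible and of maximal rank, with $|M_1|=|M_2|=N$ and $M_3=\{C_0,C_1\}$. *)

(* Defs.v *)
From Stdlib Require Import Reals.
From mathcomp Require Import all_boot all_algebra.
Local Open Scope R_scope.
Set Implicit Arguments. Unset Strict Implicit. Unset Printing Implicit Defensive.

Definition cpx : Type := (R * R)%type.
Definition c0 : cpx := (0, 0).
Definition cre (x : R) : cpx := (x, 0).
Definition cadd (u v : cpx) : cpx := (u.1 + v.1, u.2 + v.2).
Definition cmul (u v : cpx) : cpx := (u.1 * v.1 - u.2 * v.2, u.1 * v.2 + u.2 * v.1).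
Definition cconj (u : cpx) : cpx := (u.1, - u.2).
Definition cexpi (t : R) : cpx := (cos t, sin t).

(** A one-qubit vector is a function bool -> cpx (false = |0>, true = |1>);
    a three-qubit vector is bool -> bool -> bool -> cpx. *)
Definition qubit := bool -> cpx.
Definition qubit3 := bool -> bool -> bool -> cpx.

(** |phi> = (|0> + e^{i phi}|1>)/sqrt 2, the +1 eigenvector of E_phi. *)
Definition ket (phi : R) : qubit :=
  fun x => if x then cmul (cre (/ sqrt 2)) (cexpi phi) else cre (/ sqrt 2).

(** Angle of outcome a of measurement A : |A + a pi>. *)
Definition outc (A : R) (a : bool) : R := (A + (if a then PI else 0)).

Definition vl (l : R) : qubit := fun x => if x then cre (sin (l / 2)) else cre (cos (l / 2)).
Definition wl (l : R) : qubit := fun x => if x then cre (cos (l / 2)) else cre (sin (l / 2)).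
Definition Bstate (l : R) : qubit3 := fun x y z =>
  match x, y with
  | false, false => cmul (cre (/ sqrt 2)) (vl l z)
  | true, true => cmul (cre (/ sqrt 2)) (wl l z)
  | _, _ => c0
  end.

Definition sum2 (f : bool -> cpx) : cpx := cadd (f false) (f true).

Definition amplitude (psi : qubit3) (p q r : qubit) : cpx :=
  sum2 (fun x => sum2 (fun y => sum2 (fun z =>
    cmul (cmul (cmul (cconj (p x)) (cconj (q y))) (cconj (r z))) (psi x y z)))).

Definition impossible (psi : qubit3) (A B C : R) (a b c : bool) : Prop :=
  amplitude psi (ket (outc A a)) (ket (outc B b)) (ket (outc C c)) = c0.

Definition eqmod2pi (x y : R) : Prop := exists k : Z, (x - y) = (IZR k * (2 * PI)).
Definition int_mult_pi (x : R) : Prop := exists k : Z, x = (IZR k * PI).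

(** When the denominator vanishes, the arctan is taken as its limit
    value pi/2 (2 arctan = pi, which is also -pi mod 2 pi). *)
Definition beta (l phi : R) : R :=
  let num := (cos (l / 2) * sin phi) in
  let den := (sin (l / 2) + cos (l / 2) * cos phi) in
  if Req_EM_T den 0 then (phi - PI) else (phi - 2 * atan (num / den)).

(** A measurement scenario with M1 = {A 0, ..., A (N-1)}, M2 = {B 0, ..., B (N-1)},
    M3 = {C 0, C 1}: angles in [0, pi), pairwise distinct within each set. *)
Definition lam_range (l : R) : Prop := 0 <= l < PI / 2.
Definition in_0pi (x : R) : Prop := (0 <= x < PI).
Definition scenario (N : nat) (A B C : nat -> R) : Prop :=
  (forall j, (j < N)%N -> in_0pi (A j)) /\
  (forall k, (k < N)%N -> in_0pi (B k)) /\
  (forall l, (l < 2)%N -> in_0pi (C l)) /\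
  (forall j j', (j < N)%N -> (j' < N)%N -> A j = A j' -> j = j') /\
  (forall k k', (k < N)%N -> (k' < N)%N -> B k = B k' -> k = k') /\
  C 0%N <> C 1%N.

Definition paradox (psi : qubit3) (N : nat) (A B C : nat -> R) : Prop :=
  forall gA gB gC : nat -> bool,
    exists j k l, (j < N)%N /\ (k < N)%N /\ (l < 2)%N /\
      impossible psi (A j) (B k) (C l) (gA j) (gB k) (gC l).

Definition max_impossible (psi : qubit3) (N : nat) (A B C : nat -> R) : Prop :=
  forall l (z : bool), (l < 2)%N ->
    (forall j, (j < N)%N -> exists k a b, (k < N)%N /\ impossible psi (A j) (B k) (C l) a b z) /\
    (forall k, (k < N)%N -> exists j a b, (j < N)%N /\ impossible psi (A j) (B k) (C l) a b z).

Definition K_r_spec (lam : R) (N : nat) (A B C : nat -> R)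
    (K : nat -> nat -> bool -> nat) (r : nat -> nat -> bool -> bool) : Prop :=
  forall j l (z : bool), (j < N)%N -> (l < 2)%N ->
    (K j l z < N)%N /\
    int_mult_pi (A j + B (K j l z) - beta lam (outc (C l) z)) /\
    (forall k, (k < N)%N -> int_mult_pi (A j + B k - beta lam (outc (C l) z)) -> k = K j l z) /\
    eqmod2pi (A j + B (K j l z) - beta lam (outc (C l) z)) (if r j l z then PI else 0).

(** Coefficient matrix over Z_2 of Psi_0(z0) U Psi_1(z1) in the unknowns
    a_0..a_{N-1}, b_0..b_{N-1} (column c < N is a_c, column N + k is b_k);
    row i < N is the equation a_i + b_{K i 0 z0}, row N + j is a_j + b_{K j 1 z1}. *)
Definition coef_mx (N : nat) (K : nat -> nat -> bool -> nat) (z0 z1 : bool)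
    : 'M['F_2]_(N + N, N + N) :=
  \matrix_(i < N + N, c < N + N)
    (let: (j, l, z) := if (i < N)%N then (nat_of_ord i, 0%N, z0) else ((i - N)%N, 1%N, z1) in
     ((c == j :> nat)%:R + (c == (N + K j l z)%N :> nat)%:R)%R).

Definition maximal_rank (N : nat) (K : nat -> nat -> bool -> nat) : Prop :=
  forall z0 z1 : bool, \rank (coef_mx N K z0 z1) = (2 * N - 1)%N.

Definition N_regular (lam : R) (N : nat) (A B C : nat -> R) (K : nat -> nat -> bool -> nat) : Prop :=
  max_impossible (Bstate lam) N A B C /\ maximal_rank N K.

Definition xorsum (N : nat) (f : nat -> bool) : bool := \big[addb/false]_(j < N) f j.

(* Main.v *)
Require Import Defs.
From Stdlib Require Import Reals.
From Stdlib Require Import Nsatz Lra ZArith Lia.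
From mathcomp Require Import all_boot all_algebra.

Section RealPart.
Local Open Scope R_scope.

Lemma amp_eqs (lam al be ga : R) :
  amplitude (Bstate lam) (ket al) (ket be) (ket ga) = c0 ->
  let ct := cos (al + be) in let st := sin (al + be) in
  let cg := cos ga in let sg := sin ga in
  let ch := cos (lam/2) in let sh := sin (lam/2) in
  ch + cg*sh + ct*(sh + cg*ch) - st*(ch*sg) = 0 /\
  - sg*sh - ct*(ch*sg) - st*(sh+cg*ch) = 0.
Proof.
  intros E ct st cg sg ch sh.
  unfold amplitude, sum2, ket, Bstate, vl, wl, cmul, cconj, cadd, cre, cexpi, c0 in E; simpl in E.
  injection E; clear E; intros E2 E1.
  set (s := / sqrt 2) in *.
  assert (Hs : s * s * (s * s) <> 0).
  { unfold s. assert (sqrt 2 > 0) by (apply sqrt_lt_R0; lra).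
    apply Rmult_integral_contrapositive; split; apply Rmult_integral_contrapositive; split;
    apply Rinv_neq_0_compat; lra. }
  split.
  - apply (Rmult_eq_reg_l (s*s*(s*s))); [|exact Hs]. rewrite Rmult_0_r.
    match type of E1 with ?e = _ => rewrite -E1 end.
    unfold ct, st, cg, sg, ch, sh. rewrite cos_plus sin_plus. ring.
  - apply (Rmult_eq_reg_l (s*s*(s*s))); [|exact Hs]. rewrite Rmult_0_r.
    match type of E2 with ?e = _ => rewrite -E2 end.
    unfold ct, st, cg, sg, ch, sh. rewrite cos_plus sin_plus. ring.
Qed.

Lemma cos1 x : cos x = 1 -> exists k : Z, x = IZR k * (2 * PI).
Proof.
  intro H. assert (E : cos (2 * (x/2)) = 1 - 2 * sin (x/2) * sin (x/2)) by apply cos_2a_sin.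
  replace (2 * (x/2)) with x in E by field.
  assert (sin (x/2) = 0) by nra.
  destruct (sin_eq_0_0 _ H0) as [k Hk]. exists k. lra.
Qed.

Lemma h_facts lam : lam_range lam ->
  0 < cos (lam/2) /\ 0 <= sin (lam/2) /\ sin (lam/2) < cos (lam/2).
Proof.
  unfold lam_range; intros [H0 H1].
  pose proof PI_RGT_0.
  split; [apply cos_gt_0; lra|]. split; [apply sin_ge_0; lra|].
  assert (0 < cos (lam/2 + PI/4)) by (apply cos_gt_0; lra).
  rewrite cos_plus cos_PI4 sin_PI4 in H2.
  assert (0 < 1 / sqrt 2). { apply Rdiv_lt_0_compat; [lra| apply sqrt_lt_R0; lra]. }
  nra.
Qed.

Lemma ns1 (ct st cg sg ch sh : R) :
 ch + cg*sh + ct*(sh + cg*ch) - st*(ch*sg) = 0 ->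
 - sg*sh - ct*(ch*sg) - st*(sh+cg*ch) = 0 ->
 cg*cg+sg*sg-1 = 0 -> ch*ch+sh*sh-1=0 -> 
 ((ct*cg + st*sg)*((sh + cg*ch)*(sh + cg*ch) - (ch*sg)*(ch*sg)) - (st*cg - ct*sg)*(2*(sh+cg*ch)*(ch*sg)) + ((sh + cg*ch)*(sh + cg*ch) + (ch*sg)*(ch*sg))) * ((sh + cg*ch)*(sh + cg*ch) + (ch*sg)*(ch*sg))
   = 0.
Proof. intros. nsatz. Qed.

Lemma ns2 (ct st cg sg ch sh : R) :
 ch + cg*sh + ct*(sh + cg*ch) - st*(ch*sg) = 0 ->
 - sg*sh - ct*(ch*sg) - st*(sh+cg*ch) = 0 ->
 cg*cg+sg*sg-1 = 0 -> ch*ch+sh*sh-1=0 -> sh + cg*ch = 0 ->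
 (ct*cg + st*sg - 1) * (ch*sg) = 0.
Proof. intros. nsatz. Qed.

Lemma trig_core (lam th ga : R) : lam_range lam ->
  let ct := cos th in let st := sin th in
  let cg := cos ga in let sg := sin ga in
  let ch := cos (lam/2) in let sh := sin (lam/2) in
  ch + cg*sh + ct*(sh + cg*ch) - st*(ch*sg) = 0 ->
  - sg*sh - ct*(ch*sg) - st*(sh+cg*ch) = 0 ->
  exists k : Z, th - beta lam ga - PI = IZR k * (2 * PI).
Proof.
  intros Hl ct st cg sg ch sh HX HY.
  destruct (@h_facts lam Hl) as [Hc [Hs Hcs]]. fold ch sh in Hc, Hs, Hcs.
  assert (Pg : cg*cg+sg*sg-1 = 0).
  { pose proof (sin2_cos2 ga). unfold Rsqr in H. fold cg sg in H. lra. }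
  assert (Ph : ch*ch+sh*sh-1 = 0).
  { pose proof (sin2_cos2 (lam/2)). unfold Rsqr in H. fold ch sh in H. lra. }
  apply cos1. unfold beta.
  destruct (Req_EM_T (sin (lam / 2) + cos (lam / 2) * cos ga) 0) as [Hd|Hd];
    fold ch sh cg in Hd; cbn [ssrbool.is_left].
  - replace (th - (ga - PI) - PI) with (th - ga) by ring.
    rewrite cos_minus. fold ct st cg sg.
    assert (Z1 : (ct*cg + st*sg - 1) * (ch*sg) = 0) by (apply (ns2 ct st cg sg ch sh); try assumption; lra).
    assert (ch * sg <> 0).
    { intro E. assert (sg = 0) by (destruct (Rmult_integral _ _ E); lra).
      subst sg. assert (sh*sh = ch*ch) by nra. nra. }
    apply Rmult_integral in Z1. destruct Z1; lra.
  - replace (sh + ch*cg) with (sh + cg*ch) in Hd by ring.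
    set (Rr := sh + cg*ch) in *. set (Nn := ch*sg).
    set (t := cos (lam / 2) * sin ga / (sin (lam / 2) + cos (lam / 2) * cos ga)).
    assert (Ht : t = Nn / Rr) by (unfold t, Nn, Rr; fold ch sh cg sg; rewrite (Rmult_comm cg ch); reflexivity).
    set (mm := atan t).
    set (U := Rr*Rr + Nn*Nn).
    assert (HU : U <> 0) by (unfold U; nra).
    assert (q2 : sqrt (1 + t²) * sqrt (1 + t²) = 1 + t²).
    { apply sqrt_sqrt. pose proof (Rle_0_sqr t). lra. }
    assert (qnz : sqrt (1 + t²) <> 0).
    { intro E. rewrite E in q2. pose proof (Rle_0_sqr t). lra. }
    assert (C2 : cos (2*mm) = (Rr*Rr - Nn*Nn)/U).
    { rewrite cos_2a. unfold mm. rewrite cos_atan sin_atan.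
      replace (1 / sqrt (1 + t²) * (1 / sqrt (1 + t²)) - t / sqrt (1 + t²) * (t / sqrt (1 + t²)))
        with ((1 - t*t) / (sqrt (1 + t²) * sqrt (1 + t²))) by (field; exact qnz).
      rewrite q2 Ht. unfold Rsqr, U. unfold U in HU; field; repeat split; assumption. }
    assert (S2 : sin (2*mm) = (2*Rr*Nn)/U).
    { rewrite sin_2a. unfold mm. rewrite cos_atan sin_atan.
      replace (2 * (t / sqrt (1 + t²)) * (1 / sqrt (1 + t²)))
        with ((2 * t) / (sqrt (1 + t²) * sqrt (1 + t²))) by (field; exact qnz).
      rewrite q2 Ht. unfold Rsqr, U. unfold U in HU; field; repeat split; assumption. }
    replace (th - (ga - 2 * mm) - PI) with ((th - ga) + 2*mm - PI) by ring.
    rewrite cos_minus cos_PI sin_PI cos_plus cos_minus sin_minus C2 S2.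
    fold ct st cg sg.
    assert (Z1 : ((ct*cg + st*sg)*(Rr*Rr - Nn*Nn) - (st*cg - ct*sg)*(2*Rr*Nn) + U) * U = 0).
    { unfold U, Rr, Nn. apply (ns1 ct st cg sg ch sh); assumption. }
    apply Rmult_integral in Z1. destruct Z1 as [Z1|Z1]; [|contradiction].
    apply (Rmult_eq_reg_r U); [|exact HU].
    field_simplify; [|exact HU]. lra.
Qed.


Lemma imp_char lam X Y W a b c : lam_range lam -> impossible (Bstate lam) X Y W a b c ->
  exists k : Z, outc X a + outc Y b - beta lam (outc W c) - PI = IZR k * (2 * PI).
Proof.
  intros Hl Hi. unfold impossible in Hi.
  destruct (amp_eqs _ _ _ _ Hi) as [H1 H2].
  exact (trig_core lam (outc X a + outc Y b) (outc W c) Hl H1 H2).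
Qed.

Definition bz (x : bool) : Z := if x then Z.one else Z.zero.
Lemma bzE (x : bool) : (if x then PI else 0) = IZR (bz x) * PI.
Proof. destruct x; unfold bz, Z.one, Z.zero; ring. Qed.

Lemma imp_K lam N A B C K r j k l a b c : lam_range lam -> K_r_spec lam N A B C K r ->
  (j < N)%N -> (k < N)%N -> (l < 2)%N ->
  impossible (Bstate lam) (A j) (B k) (C l) a b c -> k = K j l c /\ addb a b = ~~ r j l c.
Proof.
  intros Hl Hs Hj Hk Hl2 Hi.
  destruct (imp_char lam (A j) (B k) (C l) a b c Hl Hi) as [k0 Hk0].
  unfold outc in Hk0. rewrite !bzE in Hk0.
  destruct (Hs j l c Hj Hl2) as [HKN [_ [Huniq Hmod]]].
  assert (Hint : A j + B k - beta lam (outc (C l) c) = IZR (2*k0 + 1 - bz a - bz b) * PI).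
  { rewrite !minus_IZR plus_IZR mult_IZR. unfold outc. rewrite bzE. lra. }
  assert (kK : k = K j l c) by (apply Huniq; [exact Hk | eexists; exact Hint]).
  split; [exact kK|].
  rewrite -kK in Hmod. destruct Hmod as [k1 Hk1]. rewrite Hint bzE in Hk1.
  assert (E : IZR (2*k0 + 1 - bz a - bz b - bz (r j l c) - 2 * k1) * PI = 0).
  { rewrite !minus_IZR plus_IZR !mult_IZR. rewrite !minus_IZR plus_IZR !mult_IZR in Hk1. lra. }
  apply Rmult_integral in E. destruct E as [E|E]; [|pose proof PI_RGT_0; lra].
  apply eq_IZR in E.
  unfold bz, Z.one, Z.zero in E. destruct a, b, (r j l c); cbn [addb negb] in *; try reflexivity; exfalso; lia.
Qed.


Lemma pi_diff x y q p (k1 k2 : Z) : 0 <= x < PI -> 0 <= y < PI ->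
  x + q - p = IZR k1 * PI -> y + q - p = IZR k2 * PI -> x = y.
Proof.
  intros Hx Hy H1 H2. pose proof PI_RGT_0.
  assert (E : x - y = IZR (k1 - k2) * PI) by (rewrite minus_IZR; lra).
  assert (IZR (k1 - k2) < 1) by nra.
  assert (-1 < IZR (k1 - k2)) by nra.
  apply lt_IZR in H0. apply lt_IZR in H3.
  assert (Z.sub k1 k2 = Z0) by lia.
  rewrite H4 in E. simpl in E. lra.
Qed.
End RealPart.
Arguments imp_K {lam N A B C K r j k l a b c}.
Arguments pi_diff {x y q p k1 k2}.

Section F2Part.
Import GRing.Theory.
Local Open Scope ring_scope.

Lemma solv n (M : 'M['F_2]_n) (rv : 'cV_n) : (0 < n)%N -> \rank M = n.-1 ->
  (forall c, \sum_i M i c = 0) -> \sum_i rv i 0 = 0 -> exists w : 'cV_n, M *m w = rv.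
Proof.
move=> n0 rk cs rs.
set one : 'cV['F_2]_n := const_mx 1.
have S1 : (M^T *m one == 0).
  apply/eqP/matrixP => i j; rewrite !mxE.
  rewrite -[RHS](cs i); apply: eq_bigr => c _; by rewrite !mxE mulr1.
have R1 : (rv^T *m one == 0).
  apply/eqP/matrixP => i j; rewrite !mxE.
  rewrite (ord1 i) -[RHS]rs; apply: eq_bigr => c _; by rewrite !mxE mulr1.
have rk1 : \rank one = 1%N.
  apply/eqP; rewrite eqn_leq rank_leq_col /= lt0n mxrank_eq0.
  apply/negP => /eqP/matrixP/(_ (Ordinal n0) ord0); rewrite !mxE => /eqP.
  by rewrite oner_eq0.
have sub : (rv^T <= M^T)%MS.
  apply/negPn/negP => Hn.
  have h1 : (M^T <= M^T + rv^T)%MS by apply: addsmxSl.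
  have lt : (\rank M^T < \rank (M^T + rv^T)%MS)%N.
    by rewrite (ltn_leqif (mxrank_leqif_sup h1)) addsmx_sub submx_refl /= Hn.
  have h2 : ((M^T + rv^T)%MS <= kermx one)%MS by rewrite addsmx_sub !sub_kermx S1 R1.
  move: (mxrankS h2); rewrite mxrank_ker rk1 subn1 => h3.
  move: lt; rewrite mxrank_tr rk => lt.
  by move: (leq_trans lt h3); rewrite ltnn.
case/submxP: sub => D HD.
exists D^T. by rewrite -[rv]trmxK HD trmx_mul trmxK.
Qed.

Lemma F2_cases (x : 'F_2) : x = 0 \/ x = 1.
Proof. case: x => [[|[|m]] Hm]; [left; exact/val_inj | right; exact/val_inj | by []]. Qed.
Lemma F2_dbl (x : 'F_2) : x + x = 0.
Proof. case: (F2_cases x) => ->; [by rewrite addr0 | exact/val_inj]. Qed.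
Lemma F2_addb (a b : bool) : ((a (+) b : nat)%:R : 'F_2) = (a : nat)%:R + (b : nat)%:R.
Proof. by case: a; case: b; rewrite /= ?mulr1n ?mulr0n ?addr0 ?add0r ?F2_dbl. Qed.

Lemma xorsumR N (f : nat -> bool) : ((xorsum N f : nat)%:R : 'F_2) = \sum_(j < N) ((f j : nat)%:R).
Proof.
elim: N => [|N IH]; first by rewrite /xorsum !big_ord0.
by rewrite /xorsum !big_ord_recr /= F2_addb -IH.
Qed.

Lemma sum_one N (f : nat -> nat) k :
  (forall j j', (j < N)%N -> (j' < N)%N -> f j = f j' -> j = j') ->
  (exists j, (j < N)%N /\ f j = k) ->
  \sum_(j < N) ((k == f j)%:R : 'F_2) = 1.
Proof.
move=> inj [j [jN fj]].
rewrite (bigD1 (Ordinal jN)) //= fj eqxx big1 ?addr0 // => i /eqP ne.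
case: eqP => // E; exfalso; apply: ne; apply/val_inj => /=.
by apply: inj => //; rewrite -E -fj.
Qed.

Definition wv n (w : 'cV['F_2]_n) (j : nat) : 'F_2 := \sum_(c < n) ((val c == j)%:R * w c 0).
Arguments wv {n}.

Lemma wvE n (w : 'cV['F_2]_n) (c0 : 'I_n) : wv w c0 = w c0 0.
Proof.
rewrite /wv (bigD1 c0) //= eqxx mul1r big1 ?addr0 // => c ne.
by move: ne; rewrite -(inj_eq val_inj) => /negbTE ->; rewrite mul0r.
Qed.

Section M.
Variables (N : nat) (K : nat -> nat -> bool -> nat) (z0 z1 : bool).
Local Notation M := (coef_mx N K z0 z1).

Lemma rowE0 (i : 'I_(N+N)) c : (i < N)%N ->
  M i c = ((c == i :> nat)%:R + (c == (N + K i 0%N z0)%N :> nat)%:R).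
Proof. by move=> H; rewrite mxE H. Qed.
Lemma rowE1 (i : 'I_(N+N)) c : ~~ (i < N)%N ->
  M i c = ((c == (i - N)%N :> nat)%:R + (c == (N + K (i - N) 1%N z1)%N :> nat)%:R).
Proof. by move=> H; rewrite mxE (negbTE H). Qed.

Lemma mulE0 (w : 'cV_(N+N)) (i : 'I_(N+N)) : (i < N)%N ->
  (M *m w) i 0 = wv w i + wv w (N + K i 0%N z0).
Proof.
move=> H; rewrite mxE /wv -big_split /=; apply: eq_bigr => c _.
by rewrite rowE0 // mulrDl.
Qed.
Lemma mulE1 (w : 'cV_(N+N)) (i : 'I_(N+N)) : ~~ (i < N)%N ->
  (M *m w) i 0 = wv w (i - N) + wv w (N + K (i - N) 1%N z1).
Proof.
move=> H; rewrite mxE /wv -big_split /=; apply: eq_bigr => c _.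
by rewrite rowE1 // mulrDl.
Qed.

Lemma colsum :
  (forall l z, (l < 2)%N -> z = (if l == 0%N then z0 else z1) ->
     (forall j, (j < N)%N -> (K j l z < N)%N) /\
     (forall j j', (j < N)%N -> (j' < N)%N -> K j l z = K j' l z -> j = j') /\
     (forall k, (k < N)%N -> exists j, (j < N)%N /\ K j l z = k)) ->
  forall c, \sum_i M i c = 0.
Proof.
move=> H c.
rewrite big_split_ord /=.
under eq_bigr => i _ do rewrite rowE0 /= ?ltn_ord //.
under [X in _ + X]eq_bigr => i _ do rewrite rowE1 /= ?addKn ?ltnNge ?leq_addr //.
rewrite !big_split /= addrACA F2_dbl add0r.
have [cN|cN] := ltnP c N.
  rewrite !big1 ?addr0 // => i _; case: eqP => // E; move: cN; rewrite E ltnNge leq_addr //.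
have [k Hk] : exists k, nat_of_ord c = (N + k)%N by exists (c - N)%N; rewrite subnKC.
have kN : (k < N)%N by move: (ltn_ord c); rewrite Hk ltn_add2l.
rewrite Hk.
under eq_bigr => i _ do rewrite eqn_add2l.
under [X in _ + X]eq_bigr => i _ do rewrite eqn_add2l.
have [_ [i0 s0]] := H 0%N z0 isT erefl.
have [_ [i1 s1]] := H 1%N z1 isT erefl.
rewrite (@sum_one N (fun j => K j 0%N z0) k i0 (s0 k kN)).
rewrite (@sum_one N (fun j => K j 1%N z1) k i1 (s1 k kN)).
by rewrite F2_dbl.
Qed.
End M.


Lemma F2_xor (x y : 'F_2) : (x == 1) (+) (y == 1) = (x + y == 1).
Proof. by case: (F2_cases x) => ->; case: (F2_cases y) => ->; rewrite ?F2_dbl ?addr0 ?add0r ?eqxx. Qed.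
Lemma F2_b (b : bool) : ((b : nat)%:R == 1 :> 'F_2) = b.
Proof. by case: b; rewrite /= ?mulr1n ?mulr0n ?eqxx // eq_sym oner_eq0. Qed.

Lemma solve_assign N K (r : nat -> nat -> bool -> bool) z0 z1 :
  (0 < N)%N -> \rank (coef_mx N K z0 z1) = (2 * N - 1)%N ->
  (forall l z, (l < 2)%N -> z = (if l == 0%N then z0 else z1) ->
     (forall j, (j < N)%N -> (K j l z < N)%N) /\
     (forall j j', (j < N)%N -> (j' < N)%N -> K j l z = K j' l z -> j = j') /\
     (forall k, (k < N)%N -> exists j, (j < N)%N /\ K j l z = k)) ->
  xorsum N (fun j => r j 0%N z0) = xorsum N (fun j => r j 1%N z1) ->
  exists gA gB : nat -> bool, forall j, (j < N)%N ->
    (gA j (+) gB (K j 0%N z0) = r j 0%N z0) /\ (gA j (+) gB (K j 1%N z1) = r j 1%N z1).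
Proof.
move=> N0 Hrk HK Heq.
set rv : 'cV['F_2]_(N+N) := \col_(i < N+N)
  (((if (i < N)%N then r i 0%N z0 else r (i - N)%N 1%N z1) : nat)%:R).
have cs := @colsum N K z0 z1 HK.
have rs : \sum_i rv i 0 = 0.
  rewrite big_split_ord /=.
  under eq_bigr => i _ do rewrite mxE /= ltn_ord.
  under [X in _ + X]eq_bigr => i _ do rewrite mxE /= ltnNge leq_addr /= addKn.
  by rewrite -(xorsumR N (fun j => r j 0%N z0)) -(xorsumR N (fun j => r j 1%N z1)) Heq F2_dbl.
have rk : \rank (coef_mx N K z0 z1) = (N+N).-1 by rewrite Hrk mul2n -addnn subn1.
have NN0 : (0 < N + N)%N by rewrite addn_gt0 N0.
have [w Hw] := @solv (N+N) (coef_mx N K z0 z1) rv NN0 rk cs rs.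
exists (fun j => wv w j == 1), (fun k => wv w (N + k) == 1) => j jN; split.
- have iN : (j < N + N)%N by apply: (leq_trans jN); rewrite leq_addr.
  have := congr1 (fun m : 'cV['F_2]_(N+N) => m (Ordinal iN) 0) Hw; rewrite /= (@mulE0 N K z0 z1) // mxE /= jN => E.
  by rewrite F2_xor E F2_b.
- have iN : (N + j < N + N)%N by rewrite ltn_add2l.
  have := congr1 (fun m : 'cV['F_2]_(N+N) => m (Ordinal iN) 0) Hw.
  rewrite /= (@mulE1 N K z0 z1) /= ?ltnNge ?leq_addr // mxE /= ltnNge leq_addr /= addKn => E.
  by rewrite F2_xor E F2_b.
Qed.
End F2Part.

Arguments solve_assign {N K r z0 z1}.

Lemma bool3 (a b c : bool) : a <> c -> b <> c -> a = b.
Proof. destruct a, b, c; congruence. Qed.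

Theorem corollary18 (lam : R) (N : nat) (A B C : nat -> R)
    (K : nat -> nat -> bool -> nat) (r : nat -> nat -> bool -> bool) :
  lam_range lam ->
  scenario N A B C ->
  K_r_spec lam N A B C K r ->
  N_regular lam N A B C K ->
  paradox (Bstate lam) N A B C ->
  (forall z0 z1 : bool, xorsum N (fun j => r j 0%N z0) <> xorsum N (fun j => r j 1%N z1)) /\
  (forall l, (l < 2)%N -> xorsum N (fun j => r j l false) = xorsum N (fun j => r j l true)).
Proof.
move=> Hl Hsc Hspec [Hmax Hrk] Hpar.
have N0 : (0 < N)%N.
  have [j [k [l [jN _]]]] := Hpar (fun _ => false) (fun _ => false) (fun _ => false).
  exact: (leq_ltn_trans (leq0n j) jN).
have KF : forall l z, (l < 2)%N ->
     (forall j, (j < N)%N -> (K j l z < N)%N) /\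
     (forall j j', (j < N)%N -> (j' < N)%N -> K j l z = K j' l z -> j = j') /\
     (forall k, (k < N)%N -> exists j, (j < N)%N /\ K j l z = k).
  move=> l z l2; split; [|split].
  - by move=> j jN; case: (Hspec j l z jN l2).
  - move=> j j' jN j'N E.
    case: (Hspec j l z jN l2) => _ [[k1 H1] _].
    case: (Hspec j' l z j'N l2) => _ [[k2 H2] _].
    rewrite E in H1.
    case: Hsc => [HA [_ [_ [Ainj _]]]].
    apply: Ainj => //. apply: (pi_diff _ _ H1 H2); [exact: (HA j jN) | exact: (HA j' j'N)].
  - move=> k kN. case: (Hmax l z l2) => _ /(_ k kN) [j [a [b [jN Hi]]]].
    exists j; split => //. by case: (imp_K Hl Hspec jN kN l2 Hi) => -> _.
have P1 : forall z0 z1, xorsum N (fun j => r j 0%N z0) <> xorsum N (fun j => r j 1%N z1).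
  move=> z0 z1 Heq.
  have [gA [gB Hg]] := solve_assign N0 (Hrk z0 z1) (fun l z l2 _ => KF l z l2) Heq.
  have [j [k [l [jN [kN [l2 Hi]]]]]] := Hpar gA gB (fun l => if l == 0%N then z0 else z1).
  have [kK Hx] := imp_K Hl Hspec jN kN l2 Hi.
  case: (Hg j jN) => E0 E1.
  move: l2 kK Hx; clear Hi; case: l => [|[|l]] //= _ ->.
  + rewrite E0. by case: (r j 0%N z0).
  + rewrite E1. by case: (r j 1%N z1).
split => //.
move=> l; case: l => [|[|l]] // _.
- exact: (bool3 _ _ _ (P1 false false) (P1 true false)).
- exact: (bool3 _ _ _ (fun E => P1 false false (esym E)) (fun E => P1 false true (esym E))).
Qed.
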